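(* Let $\Lambda=kQ/I$ and $\Gamma=\Lambda/J$ be representation-infinite string algebras, where $J$ is an ideal of $\Lambda$ with $\mathrm{rad}^m(\Lambda)\subseteq J\subseteq\mathrm{rad}^2(\Lambda)$ for some $m\geq2$. Suppose every indecomposable $\Lambda$-module $M$ with $JM\neq0$ is a string module. Then $\Gamma$ is of polynomial growth (resp. domestic) if and only if $\Lambda$ is of polynomial growth (resp. domestic).
   Context: $k$ algebraically closed; algebras finite-dimensional. A string algebra is $kQ/I$ with $I$ admissible and generated by paths, such that each vertex has at most two incoming and at most two outgoing arrows, and for each arrow $\alpha$ there is at most one arrow $\beta$ with $\beta\alpha\notin I$ and at most one arrow $\gamma$ with $\alpha\gamma\notin I$. Every indecomposable module over a string algebra is either a string module $M(C)$ (indexed by a string) or a band module $M(B,n,\varphi)$ (indexed by a band and an indecomposable $k[x,x^{-1}]$-module). For each $d$, $\mu(d)$ is the least number of bimodules over the algebra and $k[x]$, free of finite rank over $k[x]$, such that all but finitely many isoclasses of $d$-dimensional indecomposables are of the form $Q_j\otimes_{k[x]}k[x]/(x-\lambda)$; polynomial growth: $\mu(d)\le d^{m'}$ for a fixed $m'$ and all $d\ge2$; domestic: $\mu$ bounded. *)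

(* Defs.v *)
From HB Require Import structures.
From mathcomp Require Import all_boot all_order all_algebra.
From mathcomp Require Import falgebra.
Set Implicit Arguments. Unset Strict Implicit. Unset Printing Implicit Defensive.
Import Order.TTheory GRing.Theory.
Local Open Scope ring_scope.

(* Bound quivers.  A finite quiver has vertices 'I_n and arrows 'I_na with   *)
(* source/target maps.  A (nontrivial) path is a nonempty sequence of arrows *)
(* listed in the ORDER OF TRAVERSAL [:: a1; a2; ...; ak] with                *)
(* src a_{i+1} = tgt a_i; in the algebra it is the product ak * ... * a1.    *)
(* So the paper's "beta alpha" (alpha first) is the sequence [:: alpha; beta]*)
(* A monomial ideal I (generated by paths) is encoded by the predicate inI   *)
(* of the (nontrivial) paths lying in I; such a set is closed under          *)
(* extension, and conversely I is the span of these paths.                  *)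

Section Quiver.
Variables (n na : nat) (src tgt : 'I_na -> 'I_n).

Definition is_path (p : seq 'I_na) : bool :=
  (p != [::]) && sorted (fun x y => src y == tgt x) p.

Definition string_bq (inI : seq 'I_na -> bool) : Prop :=
  [/\ (* I is contained in rad^2: no arrow lies in I *)
      (forall x, ~~ inI [:: x]),
      (* admissible: all paths of length >= N lie in I *)
      (exists N, forall p, is_path p -> (N <= size p)%N -> inI p),
      (* I is an ideal generated by paths: closed under extension of paths *)
      (forall p q, is_path p -> is_path q -> infix p q -> inI p -> inI q),
      (forall v, #|[pred x | tgt x == v]| <= 2)%N /\
      (forall v, #|[pred x | src x == v]| <= 2)%N &
      (* for alpha: at most one beta with beta alpha notin I and at most one
         gamma with alpha gamma notin I *)
      (forall x, #|[pred y | (src y == tgt x) && ~~ inI [:: x; y]]| <= 1)%N /\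
      (forall x, #|[pred y | (tgt y == src x) && ~~ inI [:: y; x]]| <= 1)%N].

End Quiver.

(* Presentations.  [presents J src tgt inI e a] says that the elements       *)
(* e v (vertices) and a x (arrows) of the algebra A induce an isomorphism    *)
(* kQ/I ~= A/J : relations of kQ hold modulo J, paths of I vanish modulo J,  *)
(* and the images of the trivial paths and of the paths not in I form a      *)
(* basis of A/J.  With J = 0 this says A ~= kQ/I via e, a.                   *)

Definition pathprod (k : fieldType) (A : falgType k) (na : nat)
  (a : 'I_na -> A) (p : seq 'I_na) : A :=
  foldl (fun acc x => a x * acc) 1 p.

Definition presents (k : fieldType) (A : falgType k) (J : {vspace A})
  (n na : nat) (src tgt : 'I_na -> 'I_n) (inI : seq 'I_na -> bool)
  (e : 'I_n -> A) (a : 'I_na -> A) : Prop :=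
  [/\ (forall v w, e v * e w - (if v == w then e v else 0) \in J),
      (\sum_(v < n) e v) - 1 \in J,
      (forall x, a x - e (tgt x) * a x * e (src x) \in J),
      (forall p, is_path src tgt p -> inI p -> pathprod a p \in J) &
      (exists ps : seq (seq 'I_na),
         [/\ uniq ps,
             (forall p, p \in ps <-> (is_path src tgt p /\ ~~ inI p)) &
             let X := [seq e v | v <- enum 'I_n] ++ map (pathprod a) ps in
             [/\ free X, (<<X>> :&: J = 0)%VS & (<<X>> + J = fullv)%VS]])].

Definition is_ideal (k : fieldType) (A : falgType k) (J : {vspace A}) : Prop :=
  forall x y, y \in J -> (x * y \in J) /\ (y * x \in J).

(* Finite-dimensional (left) modules over A annihilated by J, i.e. modules   *)
(* over A/J (J = 0 gives all A-modules).  A d-dimensional module is k^d      *)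
(* (column vectors) with a unital k-algebra morphism A -> 'M_d.              *)

Record amod (k : fieldType) (A : falgType k) (J : {vspace A}) (d : nat) := AMod {
  rho : A -> 'M[k]_d;
  rho_lin : forall c x y, rho (c *: x + y) = c *: rho x + rho y;
  rho1 : rho 1 = 1%:M;
  rhoM : forall x y, rho (x * y) = rho x *m rho y;
  rhoJ : forall x, x \in J -> rho x = 0 }.

(* A-k[x]-bimodules (annihilated by J) that are free of rank r over k[x]:   *)
(* A acts k[x]-linearly on k[x]^r, i.e. by r x r matrices over k[x].        *)
Record abimod (k : fieldType) (A : falgType k) (J : {vspace A}) (r : nat) := ABimod {
  brho : A -> 'M[{poly k}]_r;
  brho_lin : forall c x y, brho (c *: x + y) = c%:P *: brho x + brho y;
  brho1 : brho 1 = 1%:M;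
  brhoM : forall x y, brho (x * y) = brho x *m brho y;
  brhoJ : forall x, x \in J -> brho x = 0 }.

(* Q (x)_{k[x]} k[x]/(x - lam) : evaluate the matrices at lam *)
Definition spec (k : fieldType) (A : falgType k) (J : {vspace A}) (r : nat)
  (B : abimod J r) (lam : k) : A -> 'M[k]_r :=
  fun x => map_mx (fun p => p.[lam]) (brho B x).

Definition mxiso (k : fieldType) (A : falgType k) (d1 d2 : nat)
  (f : A -> 'M[k]_d1) (g : A -> 'M[k]_d2) : Prop :=
  exists (P : 'M[k]_(d1, d2)) (Q : 'M[k]_(d2, d1)),
    [/\ P *m Q = 1%:M, Q *m P = 1%:M & forall x, f x *m P = P *m g x].

Definition indec (k : fieldType) (A : falgType k) (J : {vspace A}) (d : nat)
  (M : amod J d) : Prop :=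
  (0 < d)%N /\
  forall f : 'M[k]_d, (forall x, f *m rho M x = rho M x *m f) ->
    f *m f = f -> f = 0 \/ f = 1%:M.

Definition rep_infinite (k : fieldType) (A : falgType k) (J : {vspace A}) : Prop :=
  ~ exists (l : nat) (dims : 'I_l -> nat) (L : forall i, amod J (dims i)),
      forall d (M : amod J d), indec M -> exists i, mxiso (rho M) (rho (L i)).

(* mu(d) <= N : there are at most N bimodules Q_j such that all but finitely *)
(* many isoclasses of d-dimensional indecomposables are Q_j (x) k[x]/(x-lam) *)
Definition mu_le (k : fieldType) (A : falgType k) (J : {vspace A}) (d N : nat) : Prop :=
  exists (N' : nat) (rk : 'I_N' -> nat) (B : forall j, abimod J (rk j))
         (l : nat) (L : 'I_l -> amod J d),
    (N' <= N)%N /\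
    forall M : amod J d, indec M ->
      (exists i, mxiso (rho M) (rho (L i))) \/
      (exists j lam, mxiso (rho M) (spec (B j) lam)).

Definition poly_growth (k : fieldType) (A : falgType k) (J : {vspace A}) : Prop :=
  exists m' : nat, forall d : nat, (2 <= d)%N -> mu_le J d (d ^ m').

Definition domestic (k : fieldType) (A : falgType k) (J : {vspace A}) : Prop :=
  exists b : nat, forall d : nat, mu_le J d b.

(* A string is (v0, l) with l = [:: c_1; ...; c_r], each letter (x, true)    *)
(* direct (= arrow x) or (x, false) inverse (= x^{-1}).  M(C) has basis      *)
(* z_0, ..., z_r; c_i = x direct means x z_i = z_{i-1} (x : v_i -> v_{i-1}), *)
(* c_i = x^{-1} means x z_{i-1} = z_i (x : v_{i-1} -> v_i); z_0 lies at v0.  *)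

Section Strings.
Variables (n na : nat) (src tgt : 'I_na -> 'I_n) (inI : seq 'I_na -> bool).

Fixpoint walk_ok (v : 'I_n) (l : seq ('I_na * bool)) : bool :=
  match l with
  | [::] => true
  | (x, b) :: l' => if b then (tgt x == v) && walk_ok (src x) l'
                    else (src x == v) && walk_ok (tgt x) l'
  end.

Fixpoint vtxs (v : 'I_n) (l : seq ('I_na * bool)) : seq 'I_n :=
  v :: match l with
       | [::] => [::]
       | (x, b) :: l' => vtxs (if b then src x else tgt x) l'
       end.

Fixpoint noback (l : seq ('I_na * bool)) : bool :=
  match l with
  | x :: ((y :: _) as l') => ~~ ((x.1 == y.1) && (x.2 != y.2)) && noback l'
  | _ => true
  end.

Definition is_string (v0 : 'I_n) (l : seq ('I_na * bool)) : Prop :=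
  [/\ walk_ok v0 l, noback l &
      forall i j, (i < j)%N -> (j <= size l)%N ->
        let s := take (j - i) (drop i l) in
        (all snd s -> ~~ inI (rev (map fst s))) /\
        (all (fun c => ~~ c.2) s -> ~~ inI (map fst s))].

(* matrices of M(C) in the basis z_0..z_r (d = r + 1) *)
Definition str_e (k : fieldType) (d : nat) (v0 : 'I_n) (l : seq ('I_na * bool))
  (v : 'I_n) : 'M[k]_d :=
  \matrix_(r < d, c < d) ((r == c) && (nth v0 (vtxs v0 l) r == v))%:R.

Definition str_a (k : fieldType) (d : nat) (l : seq ('I_na * bool))
  (x : 'I_na) : 'M[k]_d :=
  \matrix_(r < d, c < d)
    ([&& (c == r.+1 :> nat) & nth None (map Some l) r == Some (x, true)]
     || [&& (r == c.+1 :> nat) & nth None (map Some l) c == Some (x, false)])%:R.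

Definition is_string_module (k : fieldType) (A : falgType k) (J : {vspace A})
  (e : 'I_n -> A) (a : 'I_na -> A) (d : nat) (M : amod J d) : Prop :=
  exists (v0 : 'I_n) (l : seq ('I_na * bool)) (P : 'M[k]_d),
    [/\ is_string v0 l, (size l).+1 = d, P \in unitmx,
        (forall v, rho M (e v) *m P = P *m str_e k d v0 l v) &
        (forall x, rho M (a x) *m P = P *m str_a k d l x)].

End Strings.

(* Main.v *)
Require Import Defs.
From HB Require Import structures.
From mathcomp Require Import all_boot all_order all_algebra.
From mathcomp Require Import falgebra.
From Stdlib Require Import ClassicalEpsilon Classical.
Set Implicit Arguments. Unset Strict Implicit. Unset Printing Implicit Defensive.
Import GRing.Theory.
Local Open Scope ring_scope.


Section G.
Variables (k : fieldType) (A : falgType k).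

Lemma mxiso_sym d1 d2 (f : A -> 'M[k]_d1) (g : A -> 'M[k]_d2) :
  mxiso f g -> mxiso g f.
Proof.
case=> P [Q [PQ QP H]]; exists Q, P; split => // x.
have -> : Q *m f x = Q *m f x *m (P *m Q) by rewrite PQ mulmx1.
by rewrite !mulmxA -(mulmxA Q) H !mulmxA QP mul1mx.
Qed.

Lemma mxiso_trans d1 d2 d3 (f : A -> 'M[k]_d1) (g : A -> 'M[k]_d2)
  (h : A -> 'M[k]_d3) : mxiso f g -> mxiso g h -> mxiso f h.
Proof.
case=> P [Q [PQ QP H]] [P' [Q' [PQ' QP' H']]]; exists (P *m P'), (Q' *m Q).
split.
- by rewrite mulmxA -(mulmxA P) PQ' mulmx1 PQ.
- by rewrite mulmxA -(mulmxA Q') QP mulmx1 QP'.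
- by move=> x; rewrite mulmxA H -!mulmxA H'.
Qed.

Lemma noI0 (i : 'I_0) : False. Proof. by case: i. Qed.

Lemma cover_lemma (J : {vspace A}) d (I : finType) (C : I -> amod J d -> Prop) :
  (forall t M1 M2, C t M1 -> C t M2 -> mxiso (rho M1) (rho M2)) ->
  exists l (L : 'I_l -> amod J d), forall M t, C t M -> exists i, mxiso (rho M) (rho (L i)).
Proof.
move=> HC.
case: (excluded_middle_informative (inhabited (amod J d))) => [inh|ninh]; last first.
  exists 0%N, (fun i => False_rect _ (noI0 i)); move=> M; by case: ninh; constructor.
pose L (i : 'I_#|I|) := epsilon inh (C (enum_val i)).
exists #|I|, L; move=> M t Mt; exists (enum_rank t).
apply: (HC t M _ Mt).
rewrite /L enum_rankK; exact: (epsilon_spec inh (C t) (ex_intro _ M Mt)).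
Qed.

End G.

Section C.
Variables (k : fieldType) (A : falgType k).

Lemma rho0 (J : {vspace A}) d (M : amod J d) : rho M 0 = 0.
Proof.
have := rho_lin M 1 0 0; rewrite !scale1r !addr0 => h.
by apply: (addrI (rho M 0)); rewrite addr0 -h.
Qed.

Lemma brho0 (J : {vspace A}) d (M : abimod J d) : brho M 0 = 0.
Proof.
have := brho_lin M 1 0 0; rewrite !scale1r !addr0 => h.
by apply: (addrI (brho M 0)); rewrite addr0 -h.
Qed.

Definition liftM (J : {vspace A}) d (M : amod J d) : amod (0%VS : {vspace A}) d :=
  @AMod _ _ 0%VS d (rho M) (rho_lin M) (rho1 M) (rhoM M)
    (fun x hx => etrans (f_equal (rho M) (eqP (eqbLR (memv0 x) hx))) (rho0 M)).

Definition descM (J : {vspace A}) d (M : amod (0%VS : {vspace A}) d)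
  (H : forall x, x \in J -> rho M x = 0) : amod J d :=
  @AMod _ _ J d (rho M) (rho_lin M) (rho1 M) (rhoM M) H.

Definition liftB (J : {vspace A}) d (M : abimod J d) : abimod (0%VS : {vspace A}) d :=
  @ABimod _ _ 0%VS d (brho M) (brho_lin M) (brho1 M) (brhoM M)
    (fun x hx => etrans (f_equal (brho M) (eqP (eqbLR (memv0 x) hx))) (brho0 M)).

Definition toJ (J : {vspace A}) d (M : abimod (0%VS : {vspace A}) d)
  (H : forall x, x \in J -> brho M x = 0) : abimod J d :=
  @ABimod _ _ J d (brho M) (brho_lin M) (brho1 M) (brhoM M) H.

Lemma B0_lin c (x y : A) : (0 : 'M[{poly k}]_0) = c%:P *: 0 + 0.
Proof. by rewrite scaler0 addr0. Qed.
Lemma B0_1 : (0 : 'M[{poly k}]_0) = 1%:M. Proof. by rewrite flatmx0. Qed.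
Lemma B0_M (x y : A) : (0 : 'M[{poly k}]_0) = (0 : 'M[{poly k}]_0) *m (0 : 'M[{poly k}]_0). Proof. by rewrite mul0mx. Qed.

Definition B0 (J : {vspace A}) : abimod J 0 :=
  @ABimod _ _ J 0 (fun _ => 0) B0_lin B0_1 B0_M (fun _ _ => erefl).

End C.

Lemma iso_annih (k : fieldType) (A : falgType k) d1 d2 (f : A -> 'M[k]_d1)
  (g : A -> 'M[k]_d2) x : mxiso f g -> f x = 0 -> g x = 0.
Proof.
case=> P [Q [PQ QP H]] fx.
by rewrite -[g x]mul1mx -QP -mulmxA -H fx mul0mx mulmx0.
Qed.

Lemma muA (k : closedFieldType) (A : falgType k) (J : {vspace A}) d N :
  mu_le (0%VS : {vspace A}) d N -> mu_le J d N.
Proof.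
case=> N' [rk [B [l [L [hN cov]]]]].
pose Jgood j := forall x, x \in J -> brho (B j) x = 0.
pose Bs j : {r : nat & abimod J r} :=
  match excluded_middle_informative (Jgood j) with
  | left H => existT _ (rk j) (toJ H)
  | right _ => existT _ 0%N (B0 J) end.
have hr : forall j, exists rs : seq k, ~ Jgood j -> forall lam,
    (forall x, x \in J -> spec (B j) lam x = 0) -> lam \in rs.
  move=> j; case: (classic (Jgood j)) => hg; first by exists [::].
  case: (classic (exists x0, x0 \in J /\ brho (B j) x0 != 0)); last first.
    move=> h; exfalso; apply: hg => x hx; apply/eqP; apply/negPn/negP => nz.
    by apply: h; exists x.
  move=> [x0 [hx0 nz]].
  case: (classic (exists r c, brho (B j) x0 r c != 0)); last first.
    move=> h; exfalso; move/eqP: nz; apply; apply/matrixP => r c; rewrite mxE.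
    by apply/eqP; apply/negPn/negP => nz; apply: h; exists r, c.
  move=> [r [c nzrc]].
  have [rs Hp] := closed_field_poly_normal (brho (B j) x0 r c).
  exists rs => _ lam hlam.
  have hz : (brho (B j) x0 r c).[lam] = 0.
    by have /matrixP/(_ r c) := hlam x0 hx0; rewrite /spec !mxE.
  have : root (brho (B j) x0 r c) lam by apply/eqP.
  by rewrite Hp rootZ ?lead_coef_eq0 // root_prod_XsubC.
pose rs j := proj1_sig (constructive_indefinite_description _ (hr j)).
have rsP j : ~ Jgood j -> forall lam,
    (forall x, x \in J -> spec (B j) lam x = 0) -> lam \in rs j.
  exact: (proj2_sig (constructive_indefinite_description _ (hr j))).
pose R := (\max_(j < N') size (rs j))%N.
pose C (t : ('I_l + ('I_N' * 'I_R))%type) (M : amod J d) : Prop :=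
  match t with
  | inl i => mxiso (rho M) (rho (L i))
  | inr (j, i) => mxiso (rho M) (spec (B j) (nth 0 (rs j) i)) end.
have [l' [L' HL]] : exists l' (L' : 'I_l' -> amod J d),
    forall M t, C t M -> exists i, mxiso (rho M) (rho (L' i)).
  apply: cover_lemma; case=> [i|[j i]] M1 M2 /= h1 h2;
  exact: (mxiso_trans h1 (mxiso_sym h2)).
exists N', (fun j => projT1 (Bs j)), (fun j => projT2 (Bs j)), l', L'.
split => // M hM.
have hM0 : indec (liftM M) by [].
case: (cov (liftM M) hM0) => [[i hi]|[j [lam hj]]].
  by left; apply: (HL M (inl i)).
case: (classic (Jgood j)) => hg.
  right; exists j, lam; rewrite /Bs.
  by case: excluded_middle_informative.
left.
have hin : lam \in rs j.
  apply: rsP => // x hx; apply: (iso_annih hj); exact: (rhoJ M hx).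
have hlt : (index lam (rs j) < R)%N.
  by apply: (leq_trans _ (leq_bigmax j)); rewrite index_mem.
apply: (HL M (inr (j, Ordinal hlt))) => /=.
by rewrite nth_index.
Qed.

Section Gen.
Variables (k : fieldType) (A : falgType k) (J : {vspace A}).
Variables (d1 d2 : nat) (M1 : amod J d1) (M2 : amod J d2) (P : 'M[k]_(d1, d2)).

Definition good y := rho M1 y *m P = P *m rho M2 y.

Lemma good1 : good 1.
Proof. by rewrite /good !rho1 mul1mx mulmx1. Qed.

Lemma goodM x y : good x -> good y -> good (x * y).
Proof.
rewrite /good !rhoM => hx hy.
by rewrite -mulmxA hy !mulmxA hx.
Qed.

Lemma goodZ c y : good y -> good (c *: y).
Proof.
rewrite /good => hy.
have e1 := rho_lin M1 c y 0; have e2 := rho_lin M2 c y 0.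
rewrite addr0 rho0 addr0 in e1; rewrite addr0 rho0 addr0 in e2.
by rewrite e1 e2 -scalemxAl hy scalemxAr.
Qed.

Lemma goodD x y : good x -> good y -> good (x + y).
Proof.
rewrite /good => hx hy.
have e1 := rho_lin M1 1 x y; have e2 := rho_lin M2 1 x y.
rewrite !scale1r in e1 e2.
by rewrite e1 e2 mulmxDl mulmxDr hx hy.
Qed.

Lemma good0 : good 0.
Proof. by rewrite /good !rho0 mul0mx mulmx0. Qed.

Lemma good_foldl na (a : 'I_na -> A) p acc :
  (forall x, good (a x)) -> good acc ->
  good (foldl (fun acc x => a x * acc) acc p).
Proof.
move=> ha; elim: p acc => [|x p IH] acc hacc //=.
by apply: IH; apply: goodM.
Qed.

Lemma good_span (X : seq A) y : (forall z, z \in X -> good z) ->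
  y \in <<X>>%VS -> good y.
Proof.
move=> hX hy.
have hy' : y \in span (in_tuple X) by [].
rewrite (coord_span hy').
apply: (big_ind good good0 goodD) => i _; apply: goodZ; apply: hX.
by apply: mem_nth; exact: ltn_ord.
Qed.

End Gen.

Lemma gen_iso (k : fieldType) (A : falgType k) (n na : nat) (src tgt : 'I_na -> 'I_n)
  (inI : seq 'I_na -> bool) (e : 'I_n -> A) (a : 'I_na -> A) :
  presents 0%VS src tgt inI e a ->
  forall d1 d2 (M1 : amod (0%VS : {vspace A}) d1) (M2 : amod (0%VS : {vspace A}) d2) P,
  (forall v, good M1 M2 P (e v)) -> (forall x, good M1 M2 P (a x)) ->
  forall y, good M1 M2 P y.
Proof.
case=> _ _ _ _ [ps [_ _ [_ _ hfull]]] d1 d2 M1 M2 P he ha y.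
rewrite addv0 in hfull.
apply: (good_span (X := [seq e v | v <- enum 'I_n] ++ map (pathprod a) ps)).
  move=> z; rewrite mem_cat => /orP [/mapP [v _ ->]|/mapP [p _ ->]] //.
  by apply: good_foldl => //; apply: good1.
by rewrite hfull memvf.
Qed.

Lemma conj_inv (k : fieldType) d (R S P : 'M[k]_d) :
  P \in unitmx -> R *m P = P *m S -> invmx P *m R = S *m invmx P.
Proof.
move=> uP h.
by rewrite -[invmx P *m R]mulmx1 -(mulmxV uP) !mulmxA -(mulmxA _ R) h mulmxA
  mulVmx // mul1mx.
Qed.

Lemma muB (k : fieldType) (A : falgType k) (n na : nat) (src tgt : 'I_na -> 'I_n)
  (inI : seq 'I_na -> bool) (e : 'I_n -> A) (a : 'I_na -> A) (J : {vspace A}) d N :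
  presents 0%VS src tgt inI e a ->
  (forall d (M : amod (0%VS : {vspace A}) d), indec M ->
     (exists x, x \in J /\ rho M x <> 0) ->
     is_string_module src tgt inI e a M) ->
  mu_le J d N -> mu_le (0%VS : {vspace A}) d N.
Proof.
move=> hpres hstr [N' [rk [B [l [L [hN cov]]]]]].
pose C (t : ('I_l + ('I_n * (d.-1).-tuple ('I_na * bool)))%type)
  (M : amod (0%VS : {vspace A}) d) : Prop :=
  match t with
  | inl i => mxiso (rho M) (rho (L i))
  | inr (v0, tl) => exists P, [/\ P \in unitmx,
       forall v, rho M (e v) *m P = P *m str_e src tgt k d v0 tl v &
       forall x, rho M (a x) *m P = P *m str_a k d tl x] end.
have [l' [L' HL]] : exists l' (L' : 'I_l' -> amod (0%VS : {vspace A}) d),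
    forall M t, C t M -> exists i, mxiso (rho M) (rho (L' i)).
  apply: cover_lemma; case=> [i|[v0 tl]] M1 M2 /=.
    by move=> h1 h2; exact: (mxiso_trans h1 (mxiso_sym h2)).
  move=> [P1 [u1 he1 ha1]] [P2 [u2 he2 ha2]].
  exists (P1 *m invmx P2), (P2 *m invmx P1); split.
  - by rewrite mulmxA -(mulmxA P1) mulVmx // mulmx1 mulmxV.
  - by rewrite mulmxA -(mulmxA P2) mulVmx // mulmx1 mulmxV.
  - apply: (gen_iso hpres) => [v|x]; rewrite /good.
      by rewrite mulmxA he1 -!mulmxA (conj_inv u2 (he2 v)).
    by rewrite mulmxA ha1 -!mulmxA (conj_inv u2 (ha2 x)).
exists N', rk, (fun j => liftB (B j)), l', L'.
split => // M hM.
case: (classic (exists x, x \in J /\ rho M x <> 0)) => hJ.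
  have [v0 [ls [P [_ hsz uP he ha]]]] := hstr d M hM hJ.
  have hs : size ls == d.-1 by rewrite -hsz.
  left; apply: (HL M (inr (v0, Tuple hs))); exists P; split => //.
have hJ' : forall x, x \in J -> rho M x = 0.
  move=> x hx; apply: NNPP => nz; apply: hJ; by exists x.
have hM' : indec (descM hJ') by [].
case: (cov _ hM') => [[i hi]|[j [lam hj]]].
  by left; apply: (HL M (inl i)).
by right; exists j, lam.
Qed.
Unset Implicit Arguments.
Theorem mainTheorem20 (k : closedFieldType) (Lam : falgType k)
  (n na : nat) (src tgt : 'I_na -> 'I_n) (inI : seq 'I_na -> bool)
  (e : 'I_n -> Lam) (a : 'I_na -> Lam) (J : {vspace Lam}) (m : nat) :
  (* Lambda = kQ/I is a string algebra, presented by e, a *)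
  string_bq src tgt inI ->
  presents 0%VS src tgt inI e a ->
  (* J is an ideal with rad^m <= J <= rad^2, m >= 2 *)
  is_ideal J ->
  (2 <= m)%N ->
  (forall p, is_path src tgt p -> (m <= size p)%N -> pathprod a p \in J) ->
  (exists ps : seq (seq 'I_na),
     (forall p, p \in ps -> is_path src tgt p /\ (2 <= size p)%N) /\
     (J <= <<map (pathprod a) ps>>)%VS) ->
  (* Gamma = Lambda/J is a string algebra *)
  (exists (n' na' : nat) (src' tgt' : 'I_na' -> 'I_n') (inI' : seq 'I_na' -> bool)
          (e' : 'I_n' -> Lam) (a' : 'I_na' -> Lam),
     string_bq src' tgt' inI' /\ presents J src' tgt' inI' e' a') ->
  (* both are representation-infinite *)
  rep_infinite (0%VS : {vspace Lam}) ->
  rep_infinite J ->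
  (* every indecomposable Lambda-module M with JM <> 0 is a string module *)
  (forall d (M : amod (0%VS : {vspace Lam}) d), indec M ->
     (exists x, x \in J /\ rho M x <> 0) ->
     is_string_module src tgt inI e a M) ->
  (poly_growth J <-> poly_growth (0%VS : {vspace Lam})) /\
  (domestic J <-> domestic (0%VS : {vspace Lam})).
Proof.
move=> _ hpres _ _ _ _ _ _ _ hstr; split; split.
- by case=> m' h; exists m' => d hd; exact: (muB hpres hstr (h d hd)).
- by case=> m' h; exists m' => d hd; apply: muA; exact: h.
- by case=> b h; exists b => d; exact: (muB hpres hstr (h d)).
- by case=> b h; exists b => d; apply: muA; exact: h.
Qed.
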